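(* Let $\mathcal{H}$ be a real Hilbert space, $A_1:\mathcal{H}\to\mathcal{H}$ monotone and $L$-Lipschitz, and $A_2:\mathcal{H}\rightrightarrows\mathcal{H}$ maximally $\mu$-strongly monotone. Let $\Gamma\subseteq\mathbb{R}_{++}$ be a nonempty closed interval and $T_\gamma:=\mathrm{Id}-J_{\gamma A_1}+J_{\gamma A_2}(2J_{\gamma A_1}-\mathrm{Id})$ for $\gamma\in\Gamma$. Then there exists $\beta\in[0,1)$ such that every $T_\gamma$, $\gamma\in\Gamma$, is a $\beta$-contraction.
   Context: $J_A=(\mathrm{Id}+A)^{-1}$. $A_2$ is $\mu$-strongly monotone if $\langle x-y,u-v\rangle\ge\mu\|x-y\|^2$ for all $(x,u),(y,v)\in\operatorname{gra}A_2$. A $\beta$-contraction satisfies $\|Tx-Ty\|\le\beta\|x-y\|$ for all $x,y$. *)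

(* Defs.v *)
From HB Require Import structures.
From mathcomp Require Import all_boot all_order all_algebra.
From mathcomp Require Import all_classical all_reals all_analysis.
Set Implicit Arguments. Unset Strict Implicit. Unset Printing Implicit Defensive.
Import Order.TTheory GRing.Theory Num.Theory.
Import numFieldNormedType.Exports.
Local Open Scope classical_set_scope.
Local Open Scope ring_scope.

HB.mixin Record NormedModule_isInnerProduct (R : realType) V
    of NormedModule R V := {
  inner : V -> V -> R;
  innerC : forall x y, inner x y = inner y x;
  innerDl : forall x y z, inner (x + y) z = inner x z + inner y z;
  innerZl : forall (a : R) x y, inner (a *: x) y = a * inner x y;
  inner_normE : forall x, inner x x = `|x| ^+ 2
}.

#[short(type="hilbertType")]
HB.structure Definition Hilbert (R : realType) :=
  { V of CompleteNormedModule R V & NormedModule_isInnerProduct R V }.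

Section Operators.
Context {R : realType} {H : hilbertType R}.

Definition setop := H -> set H.

Definition sop (A : H -> H) : setop := fun x => [set A x].

Definition monotone_op (A : setop) : Prop :=
  forall x y u v, A x u -> A y v -> 0 <= inner (x - y) (u - v).

Definition strongly_monotone_op (mu : R) (A : setop) : Prop :=
  forall x y u v, A x u -> A y v -> mu * `|x - y| ^+ 2 <= inner (x - y) (u - v).

Definition maximally_monotone_op (A : setop) : Prop :=
  monotone_op A /\
  forall B : setop, monotone_op B -> (forall x u, A x u -> B x u) ->
    forall x u, B x u -> A x u.

Definition maximally_strongly_monotone_op (mu : R) (A : setop) : Prop :=
  0 < mu /\ strongly_monotone_op mu A /\ maximally_monotone_op A.

Definition lipschitz_map (L : R) (A : H -> H) : Prop :=
  forall x y, `|A x - A y| <= L * `|x - y|.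

(* resolvent J_{gamma A} = (Id + gamma A)^{-1}: the (chosen) point y with
   x \in y + gamma A y *)
Definition resolvent (gamma : R) (A : setop) (x : H) : H :=
  get [set y | exists2 u, A y u & x = y + gamma *: u].

Definition DR_op (gamma : R) (A1 : H -> H) (A2 : setop) (x : H) : H :=
  x - resolvent gamma (sop A1) x
    + resolvent gamma A2 (2%:R *: resolvent gamma (sop A1) x - x).

Definition beta_contraction (beta : R) (T : H -> H) : Prop :=
  forall x y, `|T x - T y| <= beta * `|x - y|.

End Operators.

(* Main.v *)
Require Import Defs.
From HB Require Import structures.
From mathcomp Require Import all_boot all_order all_algebra.
From mathcomp Require Import all_classical all_reals all_analysis.
From mathcomp Require Import ring lra.
Import Order.TTheory GRing.Theory Num.Theory.
Import numFieldNormedType.Exports.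
Local Open Scope classical_set_scope.
Local Open Scope ring_scope.


Section Basic.
Context {R : realType} {H : hilbertType R}.
Implicit Types x y z : H.

Lemma innerDr x y z : inner x (y + z) = inner x y + inner x z.
Proof. by rewrite innerC innerDl !(innerC _ x). Qed.
Lemma innerZr (a : R) x y : inner x (a *: y) = a * inner x y.
Proof. by rewrite innerC innerZl innerC. Qed.
Lemma inner0l y : inner 0 y = 0 :> R.
Proof. by have := innerZl 0 0 y; rewrite scale0r !mul0r. Qed.
Lemma inner0r y : inner y 0 = 0 :> R.
Proof. by rewrite innerC inner0l. Qed.
Lemma innerNl x y : inner (- x) y = - inner x y.
Proof. by rewrite -scaleN1r innerZl mulN1r. Qed.
Lemma innerNr x y : inner x (- y) = - inner x y.
Proof. by rewrite innerC innerNl innerC. Qed.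
Lemma innerBl x y z : inner (x - y) z = inner x z - inner y z.
Proof. by rewrite innerDl innerNl. Qed.
Lemma innerBr x y z : inner x (y - z) = inner x y - inner x z.
Proof. by rewrite innerDr innerNr. Qed.
Lemma inner_ge0 x : 0 <= inner x x.
Proof. by rewrite inner_normE exprn_ge0. Qed.
Lemma inner2_le x y : 2 * inner x y <= inner x x + inner y y.
Proof.
have := inner_ge0 (x - y); rewrite !innerBl !innerBr (innerC y x); lra.
Qed.
Lemma inner_eq0 x : inner x x = 0 -> x = 0.
Proof. by rewrite inner_normE => /eqP; rewrite sqrf_eq0 normr_eq0 => /eqP. Qed.
End Basic.


Section Cont.
Context {R : realType} {H : hilbertType R}.
Implicit Types x y z w : H.

Lemma polar x w : inner x w = (`|x + w| ^+ 2 - `|x - w| ^+ 2) / 4.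
Proof.
rewrite -!inner_normE !innerDl !innerDr ?innerNl ?innerNr (innerC w x); lra.
Qed.

Lemma cvg_inner (xs : nat -> H) x w : xs n @[n --> \oo] --> x ->
  inner (xs n) w @[n --> \oo] --> inner x w.
Proof.
move=> hx.
have -> : (fun n => inner (xs n) w) = (fun n => (`|xs n + w| * `|xs n + w| - `|xs n - w| * `|xs n - w|) / 4).
  by apply: funext => n; rewrite polar !expr2.
rewrite polar !expr2.
apply: cvgM; last exact: cvg_cst.
have h1 : `|xs n + w| @[n --> \oo] --> `|x + w|.
  by apply: cvg_norm; apply: cvgD => //; exact: cvg_cst.
have h2 : `|xs n - w| @[n --> \oo] --> `|x - w|.
  by apply: cvg_norm; apply: cvgB => //; exact: cvg_cst.
by apply: cvgB; apply: cvgM.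
Qed.

Lemma cvg_sq (xs : nat -> H) x : xs n @[n --> \oo] --> x ->
  inner (xs n) (xs n) @[n --> \oo] --> inner x x.
Proof.
move=> hx.
have -> : (fun n => inner (xs n) (xs n)) = (fun n => `|xs n| * `|xs n|).
  by apply: funext => n; rewrite inner_normE expr2.
by rewrite inner_normE expr2; apply: cvgM; exact: cvg_norm.
Qed.
End Cont.


Section Minty.
Context {R : realType} {H : hilbertType R}.
Variable B : H -> set H.
Hypothesis hB : maximally_monotone_op B.

Lemma inner_swap (a b c d : H) : inner (a - b) (c - d) = inner (b - a) (d - c).
Proof. by rewrite -(opprB a b) -(opprB c d) innerNl innerNr opprK. Qed.

Lemma extend x u : (forall y v, B y v -> 0 <= inner (x - y) (u - v)) -> B x u.
Proof.
move=> hxu; case: hB => mB maxB.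
pose C : H -> set H := fun y v => B y v \/ (y = x /\ v = u).
apply: (maxB C); last by right.
- move=> y1 y2 v1 v2 [h1|[-> ->]] [h2|[-> ->]].
  + exact: mB.
  + by rewrite inner_swap; apply: hxu.
  + exact: hxu.
  + by rewrite !subrr inner0l.
- by move=> y v h; left.
Qed.

Lemma graph_ne : exists y v, B y v.
Proof.
case: (pselect (exists y v, B y v)) => // hn; exfalso; apply hn; exists 0, 0; apply: extend => y v h.
by exfalso; apply: hn; exists y, v.
Qed.

Definition g (y v x u : H) : R :=
  inner x v + inner y u - inner y v + (inner x x + inner u u) / 2.
Definition Hle (x u : H) (t : R) := forall y v, B y v -> g y v x u <= t.

Lemma key x u t : Hle x u t -> inner x u + (inner x x + inner u u) / 2 <= t.
Proof.
move=> h; rewrite leNgt; apply/negP => lt.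
have Bxu : B x u.
  apply: extend => y v hyv; have := h y v hyv; rewrite /g.
  rewrite !innerDl !innerDr ?innerNl ?innerNr; lra.
have := h x u Bxu; rewrite /g; lra.
Qed.

Lemma Hle_graph y0 v0 : B y0 v0 ->
  Hle y0 v0 (inner y0 v0 + (inner y0 y0 + inner v0 v0) / 2).
Proof.
move=> h0 y v h; have := (proj1 hB) y0 y v0 v h0 h; rewrite /g.
rewrite !innerDl !innerDr ?innerNl ?innerNr; lra.
Qed.

Definition comb (t : R) (a b : H) := (1 - t) *: a + t *: b.

Lemma g_comb y v x u x' u' t :
  g y v (comb t x x') (comb t u u') =
  (1 - t) * g y v x u + t * g y v x' u'
  - t * (1 - t) / 2 * (inner (x - x') (x - x') + inner (u - u') (u - u')).
Proof.
rewrite /g /comb !innerDl !innerDr ?innerNl ?innerNr ?innerZl ?innerZr.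
rewrite (innerC x' x) (innerC u' u).
by field.
Qed.

Lemma Hle_comb x u s x' u' s' t : 0 <= t <= 1 -> Hle x u s -> Hle x' u' s' ->
  Hle (comb t x x') (comb t u u')
   ((1 - t) * s + t * s' - t * (1 - t) / 2 * (inner (x - x') (x - x') + inner (u - u') (u - u'))).
Proof.
move=> /andP[t0 t1] h1 h2 y v hyv; rewrite g_comb.
have := h1 y v hyv; have := h2 y v hyv.
nra.
Qed.
End Minty.


Section Minty2.
Context {R : realType} {H : hilbertType R}.
Variable B : H -> set H.
Hypothesis hB : maximally_monotone_op B.

Lemma small_t (a b : R) : 0 <= b -> (forall t, 0 < t <= 1 -> - (t * b) <= a) -> 0 <= a.
Proof.
move=> b0 h; rewrite leNgt; apply/negP => a0.
have hb : 0 < b by have := h 1; rewrite ltr01 lexx /=; lra.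
pose t := (- a) / (b - a).
have t0 : 0 < t by rewrite /t divr_gt0 //; lra.
have t1 : t <= 1 by rewrite /t ler_pdivrMr; lra.
have := h t; rewrite t0 t1 => /(_ isT).
have -> : t * b = - a * (b / (b - a)) by rewrite /t; field; lra.
have : b / (b - a) < 1 by rewrite ltr_pdivrMr; lra.
nra.
Qed.

Lemma seq_small (e : R) : 0 < e -> exists N : nat, (N.+1%:R)^-1 < e.
Proof.
move=> e0; exists (Num.truncn e^-1).
by rewrite -ltf_pV2 ?(posrE,invr_gt0)// invrK truncnS_gt.
Qed.

Lemma cauchy_seq_cvg (zs : nat -> H) :
  (forall n k, (n <= k)%N -> inner (zs n - zs k) (zs n - zs k) <= 8 / n.+1%:R) ->
  cvg (zs @ \oo).
Proof.
move=> hz; apply: cauchy_cvg; apply: cauchy_exP => e e0.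
have [N hN] := seq_small (e ^+ 2 / 8) (ltac:(by rewrite divr_gt0 // exprn_gt0)).
exists (zs N); exists N => // n /= Nn.
rewrite -ball_normE /=.
have := hz N n Nn; rewrite inner_normE.
have := normr_ge0 (zs N - zs n).
move: hN; set a := N.+1%:R^-1; set d := `|zs N - zs n|.
nra.
Qed.

Lemma minty0 : exists y v, B y v /\ y + v = 0.
Proof.
pose S := [set s | exists x u, Hle B x u s].
have S0 : S !=set0.
  have [y0 [v0 h0]] := graph_ne B hB.
  by exists (inner y0 v0 + (inner y0 y0 + inner v0 v0) / 2), y0, v0; apply: (Hle_graph B hB).
have Slb : forall s, S s -> 0 <= s.
  move=> s [x [u /(key B hB)]]; have := inner_ge0 (x + u).
  rewrite !innerDl !innerDr (innerC u x); lra.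
have hinf : has_inf S by split => //; exists 0.
set m := inf S.
have mle : forall x u s, Hle B x u s -> m <= s.
  by move=> x u s h; apply: ge_inf; [case: hinf|exists x, u].
have sq : forall n : nat, exists p : H * H, Hle B p.1 p.2 (m + n.+1%:R^-1).
  move=> n; have [s [x [u hs]] lts] := @inf_adherent _ S (n.+1%:R^-1) (ltac:(by [])) hinf.
  by exists (x, u) => y v hyv; apply: le_trans (hs y v hyv) (ltW lts).
have [f hf] := choice sq.
pose xs n := (f n).1; pose us n := (f n).2.
have cb : forall n k, (n <= k)%N ->
   inner (xs n - xs k) (xs n - xs k) <= 8 / n.+1%:R /\
   inner (us n - us k) (us n - us k) <= 8 / n.+1%:R.
  move=> n k nk.
  have h := mle _ _ _ (@Hle_comb R H B _ _ _ _ _ _ (1/2) (ltac:(lra)) (hf n) (hf k)).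
  have hk : k.+1%:R^-1 <= n.+1%:R^-1 :> R.
    by rewrite lef_pV2 ?posrE // ler_nat ltnS.
  have := inner_ge0 (xs n - xs k); have := inner_ge0 (us n - us k).
  rewrite /xs /us in h *.
  have -> : 8 / n.+1%:R = 8 * n.+1%:R^-1 :> R by [].
  move=> h1 h2; move: h hk h1 h2; set a := n.+1%:R^-1; set b := k.+1%:R^-1; set D1 := inner _ _; set D2 := inner _ _; move=> h hk h1 h2; split; lra.
have cx : cvg (xs @ \oo) := cauchy_seq_cvg xs (fun n k nk => (cb n k nk).1).
have cu : cvg (us @ \oo) := cauchy_seq_cvg us (fun n k nk => (cb n k nk).2).
set xst := lim (xs @ \oo) in cx; set ust := lim (us @ \oo) in cu.
have Hst : Hle B xst ust m.
  move=> y v hyv.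
  have hG : g y v (xs n) (us n) @[n --> \oo] --> g y v xst ust.
    have -> : (fun n => g y v (xs n) (us n)) = (fun n => inner (xs n) v + inner (us n) y - inner y v + (inner (xs n) (xs n) + inner (us n) (us n)) * 2^-1).
      by apply: funext => n; rewrite /g (innerC y).
    rewrite /g (innerC y ust).
    apply: cvgD; [apply: cvgB; [apply: cvgD|exact: cvg_cst] | apply: cvgM; [apply: cvgD | exact: cvg_cst]].
    - exact: cvg_inner.
    - exact: cvg_inner.
    - exact: cvg_sq.
    - exact: cvg_sq.
  apply/ler_addgt0Pr => e e0.
  have [N hN] := seq_small e e0.
  apply: (cvgr_to_le hG); exists N => // n /= Nn.
  have := hf n y v hyv.
  have : n.+1%:R^-1 <= N.+1%:R^-1 :> R by rewrite lef_pV2 ?posrE // ler_nat ltnS.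
  rewrite /xs /us.
  move: hN; set a := n.+1%:R^-1; set b := N.+1%:R^-1; set G := g _ _ _ _; lra.
have fo : forall y v, B y v -> inner (xst + ust) (xst + ust) <= inner (y + ust) (v + xst).
  move=> y v hyv.
  have hT := Hle_graph B hB y v hyv.
  have hm := key B hB xst ust m Hst.
  set T := inner y v + (inner y y + inner v v) / 2 in hT.
  set D := inner (xst - y) (xst - y) + inner (ust - v) (ust - v).
  have D0 : 0 <= D / 2.
    by rewrite divr_ge0 // addr_ge0 // inner_ge0.
  have h : forall t, 0 < t <= 1 -> - (t * (D / 2)) <= T - m - D / 2.
    move=> t /andP[t0 t1].
    have := mle _ _ _ (@Hle_comb R H B _ _ _ _ _ _ t (ltac:(apply/andP; split; lra)) Hst hT).
    rewrite -/D => hh.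
    have : 0 <= t * (T - m - (1 - t) * (D / 2)).
      have -> : t * (T - m - (1 - t) * (D / 2)) = (1 - t) * m + t * T - t * (1 - t) / 2 * D - m by ring.
      lra.
    rewrite pmulr_rge0 //; lra.
  have := small_t _ _ D0 h.
  move: hm; rewrite /T /D !innerDl !innerDr ?innerNl ?innerNr.
  rewrite (innerC xst y) (innerC ust v) (innerC ust xst).
  lra.
have Bm : B (- ust) (- xst).
  apply: extend => // y v hyv.
  have := fo y v hyv; have := inner_ge0 (xst + ust).
  have -> : - ust - y = - (y + ust) by rewrite opprD addrC.
  have -> : - xst - v = - (v + xst) by rewrite opprD addrC.
  rewrite innerNl innerNr opprK; lra.
have hz : xst + ust = 0.
  apply: inner_eq0; apply/eqP; rewrite eq_le inner_ge0 andbT.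
  by have := fo _ _ Bm; rewrite !(addrC (- _)) !subrr inner0l.
exists (- ust), (- xst); split => //.
by rewrite -opprD addrC hz oppr0.
Qed.
End Minty2.


Section Res.
Context {R : realType} {H : hilbertType R}.

Lemma subDD (a b c d : H) : (a + b) - (c + d) = (a - c) + (b - d).
Proof. by rewrite opprD addrACA. Qed.

Lemma minty (B : H -> set H) : maximally_monotone_op B ->
  forall w, exists y v, B y v /\ w = y + v.
Proof.
move=> [mB maxB] w.
pose C : H -> set H := fun y v => B y (v + w).
have hC : maximally_monotone_op C.
  split.
    by move=> x y u v h1 h2; have := mB _ _ _ _ h1 h2; rewrite subDD subrr addr0.
  move=> D mD CD x u Dxu.
  pose D' : H -> set H := fun y v => D y (v - w).
  have mD' : monotone_op D'.
    by move=> x1 y1 u1 v1 h1 h2; have := mD _ _ _ _ h1 h2; rewrite subDD subrr addr0.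
  have BD' : forall y v, B y v -> D' y v.
    by move=> y v h; apply: CD; rewrite /C subrK.
  by apply: (maxB D' mD' BD'); rewrite /D' addrK.
have [y [v [Cyv hyv]]] := minty0 C hC.
by exists y, (v + w); split => //; rewrite addrA hyv add0r.
Qed.

Lemma resolvent_spec (gamma : R) (A : H -> set H) (x : H) :
  0 < gamma -> maximally_monotone_op A ->
  exists2 u, A (resolvent gamma A x) u & x = resolvent gamma A x + gamma *: u.
Proof.
move=> g0 [mA maxA].
pose B : H -> set H := fun y v => A y (gamma^-1 *: v).
have hB : maximally_monotone_op B.
  split.
    move=> x1 y1 u1 v1 h1 h2; have := mA _ _ _ _ h1 h2.
    rewrite -scalerBr innerZr pmulr_rge0 // invr_gt0 //.
  move=> D mD BD y v Dyv.
  pose D' : H -> set H := fun y v => D y (gamma *: v).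
  have mD' : monotone_op D'.
    move=> x1 y1 u1 v1 h1 h2; have := mD _ _ _ _ h1 h2.
    by rewrite -scalerBr innerZr pmulr_rge0.
  have AD' : forall y v, A y v -> D' y v.
    move=> y1 v1 h; apply: BD; rewrite /B scalerA mulVf ?scale1r //; lra.
  apply: (maxA D' mD' AD'); rewrite /D' scalerA divff ?scale1r //; lra.
have [y [v [Byv hyv]]] := minty B hB x.
have : exists y, exists2 u, A y u & x = y + gamma *: u.
  exists y, (gamma^-1 *: v) => //; rewrite scalerA divff ?scale1r //; lra.
by move/getPex.
Qed.

Lemma sop_max (A1 : H -> H) (L : R) :
  monotone_op (sop A1) -> lipschitz_map L A1 -> maximally_monotone_op (sop A1).
Proof.
move=> mA lipA; split => // D mD AD x u Dxu.
rewrite /sop /=; apply/eqP; rewrite -subr_eq0; apply/eqP.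
set d := u - A1 x.
set t : R := (2 * (`|L| + 1))^-1.
have t0 : 0 < t by rewrite /t invr_gt0; have := normr_ge0 L; lra.
have tL : t * (2 * (`|L| + 1)) = 1 by rewrite /t mulVf //; have := normr_ge0 L; lra.
set y := x + t *: d.
have hm := mD _ _ _ _ Dxu (AD y (A1 y) erefl).
have hxy : x - y = - (t *: d) by rewrite /y opprD addNKr.
have hu : u - A1 y = d + (A1 x - A1 y) by rewrite /d addrA subrK.
rewrite hxy hu innerNl innerZl innerDr oppr_ge0 in hm.
have hm' : inner d d + inner d (A1 x - A1 y) <= 0.
  by move: hm; rewrite pmulr_rle0.
have h2 := inner2_le (- d) (A1 x - A1 y).
rewrite innerNl innerNl innerNr opprK in h2.
have hl := lipA x y.
rewrite hxy normrN normrZ (gtr0_norm t0) in hl.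
have hz : inner (A1 x - A1 y) (A1 x - A1 y) <= L ^+ 2 * t ^+ 2 * inner d d.
  rewrite !inner_normE.
  have := normr_ge0 (A1 x - A1 y).
  have -> : L ^+ 2 = `|L| ^+ 2 by rewrite real_normK // num_real.
  have : L <= `|L| := ler_norm L.
  have := normr_ge0 d.
  move: hl; set z := `|A1 x - A1 y|; set nd := `|d|.
  move=> hl nd0 hLL z0.
  have tn : 0 <= t * nd by rewrite mulr_ge0 // ltW.
  have hA : z <= `|L| * (t * nd) by apply: le_trans hl _; rewrite ler_wpM2r.
  have hB2 : z ^+ 2 <= (`|L| * (t * nd)) ^+ 2 by rewrite lerXn2r // ?nnegrE // mulr_ge0.
  by apply: le_trans hB2 _; rewrite !exprMn mulrA.
have hL : L ^+ 2 * t ^+ 2 <= 1 / 4.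
  have -> : L ^+ 2 = `|L| ^+ 2 by rewrite real_normK // num_real.
  have := normr_ge0 L; nra.
apply: inner_eq0; apply/eqP; rewrite eq_le inner_ge0 andbT.
move: hz hL hm' h2 (inner_ge0 d); set dd := inner d d; set zz := inner _ _.
nra.
Qed.
End Res.


Section Core.
Context {R : realType} {H : hilbertType R}.

Lemma core (P U V : H) (gamma mu L a b : R) :
  0 < a -> a <= gamma <= b -> 0 < mu ->
  0 <= inner P U ->
  gamma * mu * inner (P - U - V) (P - U - V) <= inner (P - U - V) V ->
  `|U| <= gamma * `|L| * `|P| ->
  `|U + (P - U - V)| <=
    (1 - Num.min 1 (2 * a * mu) / (2 * (1 + b * `|L|) ^+ 2) / 2) * `|P + U|.
Proof.
move=> a0 /andP[ag gb] mu0 hPU hQV hU.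
set k := 1 + b * `|L|; set c := Num.min 1 (2 * a * mu); set eps := c / (2 * k ^+ 2).
set Q := P - U - V in hQV *.
have hP : P = Q + (U + V) by rewrite /Q addrACA subrK addNr addr0.
have hid : inner (P + U) (P + U) =
    inner (U + Q) (U + Q) + inner (U + V) (U + V) + 2 * inner P U + 2 * inner Q V.
  rewrite /Q !innerDl !innerDr ?innerNl ?innerNr.
  rewrite (innerC U P) (innerC V P) (innerC V U); lra.
clearbody Q.
have k1 : 1 <= k by rewrite /k lerDl mulr_ge0 // ?normr_ge0; lra.
have c0 : 0 < c by rewrite /c lt_min ltr01 /=; apply: mulr_gt0 => //; lra.
have c1 : c <= 1 by rewrite /c ge_min lexx.
have c2 : c <= 2 * a * mu by rewrite /c ge_min lexx orbT.
have k2 : 0 < 2 * k ^+ 2 by rewrite mulr_gt0 // exprn_gt0 //; lra.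
have heps : eps * (2 * k ^+ 2) = c by rewrite /eps mulfVK //; lra.
have eps0 : 0 < eps by rewrite /eps divr_gt0.
have hPQ : inner P P <= 2 * inner Q Q + 2 * inner (U + V) (U + V).
  have -> : inner P P = inner (Q + (U + V)) (Q + (U + V)) by rewrite -hP.
  have := inner2_le Q (U + V).
  move: (U + V) => W.
  rewrite innerDl !innerDr (innerC W Q); lra.
have hX : `|P + U| <= k * `|P|.
  apply: le_trans (ler_normD _ _) _.
  have : gamma * `|L| * `|P| <= b * `|L| * `|P|.
    by rewrite ler_wpM2r // ler_wpM2r.
  rewrite /k; lra.
have hX2 : inner (P + U) (P + U) <= k ^+ 2 * inner P P.
  rewrite !inner_normE -exprMn lerXn2r // ?nnegrE //.
  by rewrite mulr_ge0 //; lra.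
have gm : c <= 2 * gamma * mu.
  apply: le_trans c2 _; nra.
have eX : eps * inner (P + U) (P + U) <= c / 2 * inner P P.
  have := ler_wpM2l (ltW eps0) hX2.
  move=> h; apply: le_trans h _.
  rewrite mulrA; apply: ler_wpM2r; first exact: inner_ge0.
  rewrite -heps; lra.
have hQ0 := inner_ge0 Q.
have hW0 := inner_ge0 (U + V).
have hgm : c * inner Q Q <= 2 * gamma * mu * inner Q Q by rewrite ler_wpM2r.
have hY : inner (U + Q) (U + Q) <= (1 - eps) * inner (P + U) (P + U).
  move: hid hPQ eX hgm hQV hPU c1 hQ0 hW0.
  set X := inner (P + U) (P + U); set Y := inner (U + Q) (U + Q).
  set W := inner (U + V) (U + V); set PP := inner P P; set QQ := inner Q Q.
  set QV := inner Q V.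
  move=> hid hPQ eX hgm hQV hPU c1 hQ0 hW0.
  have : c * W <= W by rewrite ler_piMl.
  have : c / 2 * PP <= c * QQ + c * W.
    have := ler_wpM2l (ltW c0) hPQ; lra.
  have : gamma * mu * QQ * 2 <= 2 * QV by lra.
  nra.
have eps1 : eps <= 1 / 2.
  rewrite /eps ler_pdivrMr //.
  have : 1 <= k ^+ 2 by rewrite expr_ge1 //; lra.
  lra.
have hb0 : 0 <= 1 - eps / 2 by lra.
have hb2 : 1 - eps <= (1 - eps / 2) ^+ 2 by nra.
move: hY; rewrite !inner_normE.
have := normr_ge0 (U + Q); have := normr_ge0 (P + U).
set nY := `|U + Q|; set nX := `|P + U|; set be := 1 - eps / 2.
move=> nX0 nY0 hY.
rewrite leNgt; apply/negP => hlt.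
have h1 : (be * nX) ^+ 2 < nY ^+ 2 by rewrite ltrXn2r // ?nnegrE // mulr_ge0.
have h2 : (1 - eps) * nX ^+ 2 <= be ^+ 2 * nX ^+ 2 by rewrite ler_wpM2r // exprn_ge0.
move: h1; rewrite exprMn; lra.
Qed.
End Core.


Theorem lemma4p4 (R : realType) (H : hilbertType R) (A1 : H -> H) (L : R)
  (A2 : H -> set H) (mu : R) (a b : R) :
  monotone_op (sop A1) -> lipschitz_map L A1 ->
  maximally_strongly_monotone_op mu A2 ->
  0 < a -> a <= b ->
  exists beta : R, 0 <= beta < 1 /\
    forall gamma : R, a <= gamma <= b -> beta_contraction beta (DR_op gamma A1 A2).
Proof.
move=> mA1 lipA1 [mu0 [smA2 hA2]] a0 ab.
have hA1 := sop_max A1 L mA1 lipA1.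
exists (1 - Num.min 1 (2 * a * mu) / (2 * (1 + b * `|L|) ^+ 2) / 2); split.
  set k := 1 + b * `|L|; set c := Num.min 1 (2 * a * mu).
  have k1 : 1 <= k by rewrite /k lerDl mulr_ge0 // ?normr_ge0; lra.
  have c0 : 0 < c by rewrite /c lt_min ltr01 /=; apply: mulr_gt0 => //; lra.
  have c1 : c <= 1 by rewrite /c ge_min lexx.
  have k2 : 1 <= k ^+ 2 by rewrite expr_ge1 //; lra.
  have e0 : 0 < c / (2 * k ^+ 2) by rewrite divr_gt0 //; lra.
  have e1 : c / (2 * k ^+ 2) <= 1 by rewrite ler_pdivrMr; lra.
  apply/andP; split; lra.
move=> gamma /andP[ag gb] x x'.
have g0 : 0 < gamma by lra.
have [u1 hu1 hx] := resolvent_spec gamma (sop A1) x g0 hA1.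
have [u1' hu1' hx'] := resolvent_spec gamma (sop A1) x' g0 hA1.
rewrite /DR_op.
move: hu1 hx hu1' hx'.
set p := resolvent gamma (sop A1) x; set p' := resolvent gamma (sop A1) x'.
move=> hu1 hx hu1' hx'.
have [a2 ha2 hr] := resolvent_spec gamma A2 (2%:R *: p - x) g0 hA2.
have [a2' ha2' hr'] := resolvent_spec gamma A2 (2%:R *: p' - x') g0 hA2.
move: ha2 hr ha2' hr'.
set q := resolvent gamma A2 (2%:R *: p - x); set q' := resolvent gamma A2 (2%:R *: p' - x').
move=> ha2 hr ha2' hr'.
clearbody p p' q q'.
set P := p - p'; set U := gamma *: u1 - gamma *: u1'; set V := gamma *: a2 - gamma *: a2'.
have e1 : x - x' = P + U by rewrite {1}hx {1}hx' subDD.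
have e2 : q - q' = P - U - V.
  have hrr : (q - q') + V = (2%:R *: p - x) - (2%:R *: p' - x') by rewrite hr hr' subDD.
  have : (2%:R *: p - x) - (2%:R *: p' - x') = P - U.
    rewrite subDD -scalerBr -/P -opprD e1.
    by rewrite scaler_nat mulr2n subDD subrr add0r.
  move=> h; rewrite h in hrr.
  by rewrite -hrr addrK.
have e3 : x - p + q - (x' - p' + q') = U + (P - U - V).
  rewrite subDD subDD e1 -e2 -/P.
  by rewrite -opprD -/P (addrC P U) addrK.
rewrite e3 e1.
apply: (@core R H P U V gamma mu L a b) => //.
- by apply/andP.
- rewrite /U -scalerBr innerZr; apply: mulr_ge0; [lra|exact: mA1].
- rewrite -[P - U - V]e2 /V -scalerBr innerZr -mulrA ler_pM2l //.
  by rewrite inner_normE; apply: smA2.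
- rewrite /U -scalerBr normrZ (gtr0_norm g0) -mulrA ler_pM2l //.
  have -> : u1 = A1 p := hu1.
  have -> : u1' = A1 p' := hu1'.
  apply: le_trans (lipA1 p p') _; rewrite ler_wpM2r //; exact: ler_norm.
Qed.
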